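(* Let $\mathcal D_n=\{(\mathbf X_i,Y_i)\}_{i=1}^n$ where $\mathbf X_1,\dots,\mathbf X_n$ are i.i.d. uniform on $\{\pm1\}^d$ and the responses $(Y_1,\dots,Y_n)$ are independent of the covariates. Consider a tree fitted to $\mathcal D_n$ by a greedy tree algorithm with random seed $\Theta$, fix a query point $\mathbf x\in\{\pm1\}^d$, and let $J(\mathbf x;\mathcal D_n,\Theta)$ be the set of covariates split on along the query path of $\mathbf x$. Then for every nonnegative integer $t$, $$\mathbb P\{|J(\mathbf x;\mathcal D_n,\Theta)|\ge t\}\le\min\{n/2^t,1\},$$ and $\mathbb E\{|J(\mathbf x;\mathcal D_n,\Theta)|\}\le\log_2n+2$.
   Context: Greedy tree algorithm: grows a tree top-down from $\{\pm1\}^d$ over cells $C=\{\mathbf x:x_j=z_j,\ j\in J(C)\}$; each new cell is checked against a stopping condition and otherwise split into $C\cap\{x_k=\pm1\}$ on a maximizer over $k\notin J(C)$ of $\mathcal O(k;C,\mathcal D_n)=\mathcal F(\{(X_{ik},Y_i)\}_{i:\mathbf X_i\in C})$, with $\mathcal F$ fixed and invariant under $X_{ik}\mapsto-X_{ik}$; the tree may be pruned. The query path of $\mathbf x$ is the root-to-leaf path to the leaf containing $\mathbf x$; $J(\mathbf x;\mathcal D_n,\Theta)$ is the set of split covariates of its internal nodes (its cardinality equals the path length). *)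

(* Defs.v *)
From mathcomp Require Import all_boot all_order all_algebra.
From mathcomp Require Import all_classical all_reals all_analysis.

Set Implicit Arguments.
Unset Strict Implicit.
Unset Printing Implicit Defensive.

Import Order.TTheory GRing.Theory Num.Theory.
Local Open Scope ring_scope.

(* Points of {+-1}^d, encoded with true = +1 and false = -1;
   sign flip x_k |-> -x_k is negb. *)
Definition hcube (d : nat) := {ffun 'I_d -> bool}.

Definition data (n d : nat) := {ffun 'I_n -> hcube d}.

(* A cell C = {x : x_j = z_j, j in J(C)}: c j = Some z_j if j in J(C),
   None otherwise. *)
Definition cell (d : nat) := {ffun 'I_d -> option bool}.

Definition root_cell (d : nat) : cell d := [ffun => None].

Definition in_cell (d : nat) (c : cell d) (z : hcube d) : bool :=
  [forall j, if c j is Some b then z j == b else true].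

Definition Jc (d : nat) (c : cell d) : {set 'I_d} := [set j | c j != None].

Definition child (d : nat) (c : cell d) (k : 'I_d) (b : bool) : cell d :=
  [ffun j => if j == k then Some b else c j].

Definition objective (R : realType) (d n : nat) (TY : Type)
  (F : seq (bool * TY) -> R) (X : data n d) (Y : 'I_n -> TY)
  (c : cell d) (k : 'I_d) : R :=
  F [seq (X i k, Y i) | i <- enum 'I_n & in_cell c (X i)].

Definition maximizers (R : realType) (d n : nat) (TY : Type)
  (F : seq (bool * TY) -> R) (X : data n d) (Y : 'I_n -> TY)
  (c : cell d) : {set 'I_d} :=
  [set k | (k \notin Jc c) &&
     [forall k', (k' \notin Jc c) ==>
        (objective F X Y c k' <= objective F X Y c k)]].

(* A node is a leaf if no covariate remains, if the stopping condition
   holds, or if it was collapsed by pruning. *)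
Fixpoint qpath_rec (d : nat) (leaf : cell d -> bool)
  (splitv : cell d -> 'I_d) (x : hcube d) (fuel : nat) (c : cell d)
  : seq 'I_d :=
  match fuel with
  | 0 => [::]
  | f.+1 =>
      if (#|Jc c| == d) || leaf c then [::]
      else let k := splitv c in k :: qpath_rec leaf splitv x f (child c k (x k))
  end.

Definition Jquery (R : realType) (d n : nat) (TY TH : Type)
  (F : seq (bool * TY) -> R)
  (sel : TH -> {set 'I_d} -> {set 'I_d} -> 'I_d)
  (stop : TH -> data n d -> ('I_n -> TY) -> cell d -> bool)
  (prune : TH -> data n d -> ('I_n -> TY) -> cell d -> bool)
  (th : TH) (X : data n d) (Y : 'I_n -> TY) (x : hcube d) : {set 'I_d} :=
  [set k in qpath_rec (fun c => stop th X Y c || prune th X Y c)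
                      (fun c => sel th (Jc c) (maximizers F X Y c))
                      x d (root_cell d)].

Local Open Scope ereal_scope.

(* P{|J(x;D_n,Theta)| >= t}: X uniform on ({+-1}^d)^n (i.e. X_i i.i.d.
   uniform), independent of (Y, Theta) whose joint law is mu. *)
Definition probJge (R : realType) (d n : nat) (TY TH : Type)
  (F : seq (bool * TY) -> R)
  (sel : TH -> {set 'I_d} -> {set 'I_d} -> 'I_d)
  (stop : TH -> data n d -> ('I_n -> TY) -> cell d -> bool)
  (prune : TH -> data n d -> ('I_n -> TY) -> cell d -> bool)
  (x : hcube d) (dT : measure_display) (T : measurableType dT)
  (mu : probability T R) (Yr : T -> 'I_n -> TY) (Thr : T -> TH) (t : nat)
  : \bar R :=
  \int[mu]_w
    ((#|[set X : data n d |
          (t <= #|Jquery F sel stop prune (Thr w) X (Yr w) x|)%N]|%:R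
      / #|{: data n d}|%:R)%R)%:E.

Definition expJ (R : realType) (d n : nat) (TY TH : Type)
  (F : seq (bool * TY) -> R)
  (sel : TH -> {set 'I_d} -> {set 'I_d} -> 'I_d)
  (stop : TH -> data n d -> ('I_n -> TY) -> cell d -> bool)
  (prune : TH -> data n d -> ('I_n -> TY) -> cell d -> bool)
  (x : hcube d) (dT : measure_display) (T : measurableType dT)
  (mu : probability T R) (Yr : T -> 'I_n -> TY) (Thr : T -> TH)
  : \bar R :=
  \int[mu]_w
    (((\sum_(X : data n d)
         (#|Jquery F sel stop prune (Thr w) X (Yr w) x|)%:R)
      / #|{: data n d}|%:R)%R)%:E.

(* Main.v *)
Require Import Defs.
From mathcomp Require Import all_boot all_order all_algebra.
From mathcomp Require Import all_classical all_reals all_analysis.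
From mathcomp Require Import zify ring lra.

Import Order.TTheory GRing.Theory Num.Theory.
Local Open Scope ring_scope.


Lemma int_le_cst (R : realType) (dT : measure_display) (T : measurableType dT)
  (mu : probability T R) (f : T -> R) (B : R) :
  (forall w, 0 <= f w) -> (forall w, f w <= B) ->
  (\int[mu]_w (f w)%:E <= B%:E)%E.
Proof.
move=> f0 fB.
have -> : B%:E = (\int[mu]_w (cst B%:E) w)%E.
  rewrite integral_cst //; rewrite -[LHS]mule1; congr (_ * _)%E; apply/esym; exact: probability_setT.
rewrite /integral.
set h1 := (fun w => (f w)%:E) \_ setT.
set h2 := (cst B%:E) \_ setT.
have E1 : (h1^\-)%E = cst 0%E.
  apply/funext => w; apply: (ge0_funenegE (D:=setT)); last exact: in_setT.
  by move=> v _; rewrite /h1 /patch; case: ifP => //; rewrite lee_fin.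
have E2 : (h2^\-)%E = cst 0%E.
  apply/funext => w; apply: (ge0_funenegE (D:=setT)); last exact: in_setT.
  by move=> v _; rewrite /h2 /patch; case: ifP => //; rewrite lee_fin (le_trans (f0 w)).
have P1 : (h1^\+)%E = (fun w => (f w)%:E).
  apply/funext => w; rewrite (ge0_funeposE (D:=setT)); last exact: in_setT.
    by rewrite /h1 /patch in_setT.
  by move=> v _; rewrite /h1 /patch; case: ifP => //; rewrite lee_fin.
have P2 : (h2^\+)%E = cst B%:E.
  apply/funext => w; rewrite (ge0_funeposE (D:=setT)); last exact: in_setT.
    by rewrite /h2 /patch in_setT.
  by move=> v _; rewrite /h2 /patch; case: ifP => //; rewrite lee_fin (le_trans (f0 w)).
rewrite E1 E2 P1 P2; apply: leeB => //.
apply: ereal_sup_le => _ [h /= hh <-]; exists h => //= w.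
apply: (le_trans (hh w)); by rewrite lee_fin.
Qed.


Lemma real_bound (R : realType) (a N n t : nat) : (0 < N)%N ->
  (a * 2 ^ t <= n * N)%N -> (a <= N)%N ->
  a%:R / N%:R <= Num.min (n%:R / 2 ^+ t) 1 :> R.
Proof.
move=> N0 h1 h2; rewrite le_min; apply/andP; split.
  rewrite ler_pdivrMr ?ltr0n // mulrAC ler_pdivlMr ?exprn_gt0 ?ltr0n //.
  by rewrite -natrX -!natrM ler_nat.
by rewrite ler_pdivrMr ?ltr0n // mul1r ler_nat.
Qed.

Lemma sum_lt_min (D m : nat) : (\sum_(t < D) (t < m : nat) = minn D m)%N.
Proof.
elim: D => [|D IH]; first by rewrite big_ord0 min0n.
rewrite big_ord_recr /= IH; case: (ltnP D m) => h /=; lia.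
Qed.

Lemma geo (R : realType) (m D : nat) :
  \sum_(t < D) (if (m <= t)%N then (2 ^+ t.+1)^-1 else 0) =
  (if (m <= D)%N then (2 ^+ m)^-1 - (2 ^+ D)^-1 else 0 : R).
Proof.
elim: D => [|D IH]; first by rewrite big_ord0; case: m => //= ; rewrite subrr.
rewrite big_ord_recr /= IH.
have [h|h] := leqP m D.
  rewrite (leq_trans h (leqnSn _)) exprS invfM; lra.
case: (leqP m D.+1) => h2; last by rewrite addr0.
have -> : m = D.+1 by lia.
by rewrite subrr addr0.
Qed.

Lemma exp_bound (R : realType) (n N D : nat) (a : nat -> nat) :
  (0 < n)%N -> (0 < N)%N ->
  (forall t, a t * 2 ^ t.+1 <= n * N)%N -> (forall t, a t <= N)%N ->
  (\sum_(t < D) a t)%N%:R / N%:R <= ln (n%:R : R) / ln 2 + 2.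
Proof.
move=> n0 N0 ha hb.
pose m := trunc_log 2 n.
have hm1 : (2 ^ m <= n)%N by apply: trunc_logP.
have hm2 : (n < 2 ^ m.+1)%N by apply: trunc_log_ltn.
have l2 : (0 : R) < ln 2 by apply: ln_gt0; rewrite ltr1n.
have Nr : (0 : R) < N%:R by rewrite ltr0n.
have step : forall t : 'I_D, (a t)%:R / N%:R <=
   (t < m : nat)%:R + (if (m <= t)%N then n%:R * (2 ^+ t.+1)^-1 else 0) :> R.
  move=> t; case: (ltnP t m) => h /=.
    by rewrite addr0 ler_pdivrMr // mul1r ler_nat.
  rewrite mulr0n add0r ler_pdivrMr // mulrAC ler_pdivlMr ?exprn_gt0 ?ltr0n //.
  by rewrite -natrX -!natrM ler_nat.
rewrite natr_sum mulr_suml (le_trans (ler_sum _ (fun t _ => step t))) //.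
rewrite big_split /= -natr_sum sum_lt_min.
have -> : \sum_(t < D) (if (m <= t)%N then n%:R * (2 ^+ t.+1)^-1 else 0) =
          n%:R * \sum_(t < D) (if (m <= t)%N then (2 ^+ t.+1)^-1 else 0) :> R.
  rewrite mulr_sumr; apply: eq_bigr => t _; by case: ifP; rewrite ?mulr0.
rewrite geo.
have A1 : ln (2 ^+ m : R) <= ln (n%:R : R).
    by rewrite ler_ln ?posrE ?exprn_gt0 ?ltr0n // -natrX ler_nat.
have A : (minn D m)%:R <= ln (n%:R : R) / ln 2.
  rewrite ler_pdivlMr // (le_trans _ A1) // lnXn ?ltr0n // -[ln 2 *+ m]mulr_natl.
  by rewrite ler_wpM2r ?(ltW l2) // ler_nat geq_minr.
have B : n%:R * (if (m <= D)%N then (2 ^+ m)^-1 - (2 ^+ D)^-1 else 0) <= 2 :> R.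
  case: ifP => _; last by rewrite mulr0.
  have p : (0 : R) < 2 ^+ m by rewrite exprn_gt0.
  have q : n%:R * (2 ^+ m)^-1 <= 2 :> R.
    rewrite ler_pdivrMr // -exprS.
    have := ltnW hm2; rewrite -(ler_nat R) natrX; exact.
  have r : 0 <= n%:R * (2 ^+ D)^-1 :> R.
    by rewrite mulr_ge0 // invr_ge0 exprn_ge0.
  rewrite mulrBr; lra.
exact: lerD.
Qed.


Section Comb.
Variables (R : realType) (d n : nat) (TY TH : Type).
Variable F : seq (bool * TY) -> R.
Hypothesis hF : forall s : seq (bool * TY), F [seq (~~ p.1, p.2) | p <- s] = F s.
Variable sel : TH -> {set 'I_d} -> {set 'I_d} -> 'I_d.
Hypothesis hsel : forall (th : TH) (A M : {set 'I_d}), M != finset.set0 -> sel th A M \in M.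
Variables (th : TH) (Y : 'I_n -> TY) (x : hcube d).

Definition sv (X : data n d) (c : cell d) := sel th (Jc c) (maximizers F X Y c).
Definition gstep (X : data n d) (c : cell d) := child c (sv X c) (x (sv X c)).
Definition g (X : data n d) j := iter j (gstep X) (root_cell d).
Definition Nc (X : data n d) (c : cell d) := #|[set i | in_cell c (X i)]|.
Definition flip (k : 'I_d) (X : data n d) : data n d :=
  [ffun i => [ffun j => if j == k then ~~ X i j else X i j]].

Lemma flipK k : involutive (flip k).
Proof.
move=> X; apply/ffunP => i; apply/ffunP => j; rewrite !ffunE.
by case: eqP => //; rewrite negbK.
Qed.

Lemma in_cell_flip (k : 'I_d) (X : data n d) (c : cell d) i : c k = None -> in_cell c (flip k X i) = in_cell c (X i).
Proof.
move=> ck; rewrite /in_cell; apply: eq_forallb => j; rewrite !ffunE.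
by case: eqP => // ->; rewrite ck.
Qed.

Lemma objective_flip (k : 'I_d) (X : data n d) (c : cell d) k' : c k = None ->
  objective F (flip k X) Y c k' = objective F X Y c k'.
Proof.
move=> ck; rewrite /objective.
rewrite (eq_filter (a2 := fun i => in_cell c (X i))); last by move=> i; rewrite in_cell_flip.
have [->|nk] := eqVneq k' k.
  rewrite -[RHS]hF -map_comp; congr (F _); apply: eq_map => i /=; by rewrite !ffunE eqxx.
congr (F _); apply: eq_map => i /=; by rewrite !ffunE (negbTE nk).
Qed.

Lemma sv_flip (k : 'I_d) (X : data n d) (c : cell d) : c k = None -> sv (flip k X) c = sv X c.
Proof.
move=> ck; rewrite /sv; congr sel; apply/setP => k'; rewrite !inE objective_flip //.
congr (_ && _); apply: eq_forallb => k''; by rewrite !objective_flip.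
Qed.

Lemma Jc_child (c : cell d) k b : Jc (child c k b) = k |: Jc c.
Proof.
apply/setP => j; rewrite !inE ffunE; by case: (j == k).
Qed.

Lemma notin_Jc (c : cell d) k : (k \notin Jc c) = (c k == None).
Proof. by rewrite inE negbK. Qed.

Lemma Jc_g_mono X m j : (m <= j)%N -> Jc (g X m) \subset Jc (g X j).
Proof.
elim: j => [|j IH]; first by rewrite leqn0 => /eqP ->.
rewrite leq_eqVlt => /orP [/eqP -> //|]; rewrite ltnS => /IH H.
apply: (fintype.subset_trans H _); rewrite /g iterS /gstep Jc_child; exact: finset.subsetUr.
Qed.

Lemma g_flip X j k : k \notin Jc (g X j) ->
  forall m, (m <= j)%N -> g (flip k X) m = g X m.
Proof.
move=> kj; elim => [//|m IH] mj.
rewrite /g !iterS -/(g _ m) -/(g _ m) IH ?(ltnW mj) //.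
have km : k \notin Jc (g X m).
  apply: contra kj; apply/fintype.subsetP; exact: Jc_g_mono (ltnW mj).
by rewrite /gstep sv_flip //; apply/eqP; rewrite -notin_Jc.
Qed.

Lemma sv_fresh X (c : cell d) : (#|Jc c| < d)%N -> sv X c \notin Jc c.
Proof.
move=> lt; have [k0 k0P] : exists k0, k0 \notin Jc c.
  case: (pickP (fun k => k \notin Jc c)) => [k0 H|none]; first by exists k0.
  have : Jc c = [set: 'I_d].
    by apply/setP => k; rewrite finset.in_setT; apply/negbFE; exact: none k.
  by move=> E; move: lt; rewrite E cardsT card_ord ltnn.
have : maximizers F X Y c != finset.set0.
  apply/finset.set0Pn.
  case: (@arg_maxP _ _ _ k0 (fun k => k \notin Jc c) (fun k => objective F X Y c k) k0P) => k kP kmax.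
  exists k; rewrite inE kP /=; apply/forallP => k'; apply/implyP => /kmax.
  done.
by move/(hsel th (Jc c)); rewrite inE => /andP [].
Qed.

Lemma card_Jc_g X m : (m <= d)%N -> #|Jc (g X m)| = m.
Proof.
elim: m => [_|m IH lt]; first by rewrite /g /= /Jc; apply/eqP; rewrite cards_eq0;
  apply/eqP/setP => j; rewrite !inE ffunE.
rewrite /g iterS -/(g X m) /gstep Jc_child cardsU1 IH ?(ltnW lt) //.
by rewrite sv_fresh // IH ?(ltnW lt).
Qed.


Lemma in_cell_child (c : cell d) k b (z : hcube d) : c k = None ->
  in_cell (child c k b) z = in_cell c z && (z k == b).
Proof.
move=> ck; apply/forallP/andP => [H|[/forallP H hb] j].
  split; last by have := H k; rewrite ffunE eqxx.
  apply/forallP => j; have := H j; rewrite ffunE; case: eqP => [->|//]; by rewrite ck.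
by rewrite ffunE; case: eqP => [->|_] //; exact: H.
Qed.

Lemma Nc_split X (c : cell d) k b : c k = None ->
  (Nc X (child c k b) + Nc (flip k X) (child c k b) = Nc X c)%N.
Proof.
move=> ck; rewrite /Nc -(cardsID [set i | X i k == b] [set i | in_cell c (X i)]).
congr (_ + _)%N; apply: eq_card => i; rewrite !inE !in_cell_child // ?in_cell_flip //.
all: try rewrite !ffunE eqxx; by case: (X i k); case: b; case: (in_cell c (X i)).
Qed.

Definition S j := (\sum_(X : data n d) Nc X (g X j))%N.

Lemma S_step j : (j < d)%N -> (2 * S j.+1 = S j)%N.
Proof.
move=> jd.
pose phi X := flip (sv X (g X j)) X.
have fresh X : sv X (g X j) \notin Jc (g X j).
  by apply: sv_fresh; rewrite card_Jc_g // ltnW.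
have gphi X : g (phi X) j = g X j by apply: g_flip (fresh X) _ _.
have svphi X : sv (phi X) (g X j) = sv X (g X j).
  by apply: sv_flip; apply/eqP; rewrite -notin_Jc; exact: fresh.
have gphi1 X : g (phi X) j.+1 = g X j.+1.
  by rewrite /g !iterS -/(g _ j) -/(g _ j) gphi /gstep svphi.
have phiK : involutive phi.
  by move=> X; rewrite /phi -/(phi X) gphi svphi flipK.
rewrite /S mul2n -addnn {1}(reindex_inj (inv_inj phiK)) /= -big_split /=.
apply: eq_bigr => X _; rewrite -[gstep (phi X) _]/(g (phi X) j.+1) gphi1 -[gstep X _]/(g X j.+1) addnC /g iterS -/(g X j) /gstep.
idtac.
apply: Nc_split; apply/eqP; rewrite -notin_Jc; exact: fresh.
Qed.

Lemma S_eq j : (j <= d)%N -> (S j * 2 ^ j = n * #|{: data n d}|)%N.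
Proof.
elim: j => [_|j IH jd].
  rewrite /S expn0 muln1 mulnC -sum_nat_const; apply: eq_bigr => X _.
  rewrite /Nc /g /=.
  have -> : [set i | in_cell (root_cell d) (X i)] = [set: 'I_n].
    apply/setP => i; rewrite !inE; apply/forallP => j; by rewrite ffunE.
  by rewrite cardsT card_ord.
by rewrite -IH ?(ltnW jd) // -(S_step j jd) expnS mulnCA mulnA.
Qed.


Lemma qpath_size (leaf : cell d -> bool) splitv f (c : cell d) :
  (size (qpath_rec leaf splitv x f c) <= f)%N.
Proof.
elim: f c => [//|f IH] c /=; case: ifP => // _ /=; exact: IH.
Qed.

Lemma qpath_nleaf (leaf : cell d -> bool) splitv f (c : cell d) j :
  (j < size (qpath_rec leaf splitv x f c))%N ->
  ~~ leaf (iter j (fun c => child c (splitv c) (x (splitv c))) c).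
Proof.
elim: f c j => [//|f IH] c j /=; case: ifP => // /negbT; rewrite negb_or => /andP [_ nl] /=.
case: j => [//|j]; rewrite ltnS => /IH; by rewrite iterSr.
Qed.

Variable stop : TH -> data n d -> ('I_n -> TY) -> cell d -> bool.
Hypothesis hstop : forall (th : TH) (X : data n d) (Y : 'I_n -> TY) (c : cell d),
     (#|[set i | in_cell c (X i)]| < 2)%N -> stop th X Y c.
Variable prune : TH -> data n d -> ('I_n -> TY) -> cell d -> bool.

Definition At t := [set X : data n d | (t <= #|Jquery F sel stop prune th X Y x|)%N].

Lemma At_prop t X : X \in At t.+1 ->
  (t < d)%N /\ (2 <= Nc X (g X t))%N.
Proof.
rewrite inE /Jquery cardsE => H.
have H1 := leq_trans H (card_size _).
split; first exact: leq_trans H1 (qpath_size _ _ _ _).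
have := @qpath_nleaf _ _ _ _ _ H1; rewrite negb_or => /andP [ns _].
rewrite leqNgt; apply/negP => /(hstop th X Y) => st; by rewrite st in ns.
Qed.

Lemma At_bound t : (0 < n)%N -> (#|At t| * 2 ^ t <= n * #|{: data n d}|)%N.
Proof.
move=> n0; case: t => [|t].
  by rewrite expn0 muln1 (leq_trans (max_card _)) // leq_pmull.
have [td|td] := ltnP t d; last first.
  suff -> : #|At t.+1| = 0%N by [].
  apply: eq_card0 => X; apply/negP => /At_prop [] /leq_trans /(_ td); by rewrite ltnn.
rewrite -(S_eq t (ltnW td)) expnS mulnA leq_mul2r; apply/orP; right.
rewrite -sum_nat_const big_mkcond /= /S; apply: leq_sum => X _.
by case: ifP => // /At_prop [].
Qed.


Lemma J_le X : (#|Jquery F sel stop prune th X Y x| <= d)%N.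
Proof. by rewrite (leq_trans (max_card _)) // card_ord. Qed.

Lemma sumJ : (\sum_(X : data n d) #|Jquery F sel stop prune th X Y x| =
  \sum_(t < d) #|At t.+1|)%N.
Proof.
have E X : #|Jquery F sel stop prune th X Y x| =
    (\sum_(t < d) (t < #|Jquery F sel stop prune th X Y x| : nat))%N.
  by rewrite sum_lt_min; apply/esym/minn_idPr; exact: J_le.
rewrite (eq_bigr _ (fun X _ => E X)).
rewrite exchange_big /=; apply: eq_bigr => t _.
rewrite -sum1_card [RHS]big_mkcond /=; apply: eq_bigr => X _; rewrite inE; by case: ifP.
Qed.

End Comb.

Theorem lemmaC2 (R : realType) (d n : nat) (TY TH : Type)
  (F : seq (bool * TY) -> R)
  (hF : forall s : seq (bool * TY), F [seq (~~ p.1, p.2) | p <- s] = F s)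
  (sel : TH -> {set 'I_d} -> {set 'I_d} -> 'I_d)
  (hsel : forall (th : TH) (A M : {set 'I_d}), M != finset.set0 -> sel th A M \in M)
  (stop : TH -> data n d -> ('I_n -> TY) -> cell d -> bool)
  (hstop : forall (th : TH) (X : data n d) (Y : 'I_n -> TY) (c : cell d),
     (#|[set i | in_cell c (X i)]| < 2)%N -> stop th X Y c)
  (prune : TH -> data n d -> ('I_n -> TY) -> cell d -> bool)
  (x : hcube d)
  (dT : measure_display) (T : measurableType dT) (mu : probability T R)
  (Yr : T -> 'I_n -> TY) (Thr : T -> TH) :
  (0 < n)%N ->
  (forall t : nat,
     (probJge F sel stop prune x mu Yr Thr t
        <= (Num.min (n%:R / 2 ^+ t) 1)%:E)%E) /\
  (expJ F sel stop prune x mu Yr Thr <= (ln n%:R / ln 2 + 2)%:E)%E.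
Proof.
move=> n0.
have Nd0 : (0 < #|{: data n d}|)%N.
  by apply/card_gt0P; exists [ffun _ => [ffun _ => true]].
split.
  move=> t; rewrite /probJge; apply: int_le_cst => w.
    by rewrite divr_ge0 // ler0n.
  apply: real_bound => //; last exact: max_card.
  exact: (@At_bound _ _ _ _ _ _ hF sel hsel (Thr w) (Yr w) x stop hstop prune t n0).
rewrite /expJ; apply: int_le_cst => w.
  by rewrite divr_ge0 // ?ler0n // sumr_ge0 // => X _; rewrite ler0n.
rewrite -natr_sum (@sumJ _ _ _ _ _ _ sel (Thr w) (Yr w) x stop prune).
apply: (@exp_bound R n #|{: data n d}| d (fun t => #|@At _ _ _ _ _ F sel (Thr w) (Yr w) x stop prune t.+1|)) => // t; last exact: max_card.
exact: (@At_bound _ _ _ _ _ _ hF sel hsel (Thr w) (Yr w) x stop hstop prune t.+1 n0).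
Qed.
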